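(* For all finite sets of formulas $\Gamma,\Delta$: if $\Gamma\Vdash^{cf}\Delta$, then the sequent $\Gamma\Rightarrow\Delta$ is provable in $\mathsf{CLp}$.
   Context: Fix a countably infinite set $\mathsf{At}$ of atoms. Formulas are built from atoms and the constant $\bot$ using the binary connectives $\land,\lor,\to$. All contexts are finite sets (not multisets) of formulas; a comma denotes union; a subscript $\mathsf{At}$ indicates a finite set of atoms. An atomic sequent has the form $\Gamma_{\mathsf{At}} \Rightarrow \Delta_{\mathsf{At}}$. An atomic rule has finitely many (possibly zero) atomic sequents as premises and one atomic sequent as conclusion; a rule with zero premises is an atomic axiom. A base is a (possibly empty) set of atomic rules; $\mathcal{C}\supseteq\mathcal{B}$ ($\mathcal{C}$ extends $\mathcal{B}$) if $\mathcal{C}$ contains every rule of $\mathcal{B}$. Derivability $\vdash_{\mathcal{B}}$ of atomic sequents is the least relation such that: (Axiom/Weakening) if an atomic axiom with conclusion $\Gamma_{\mathsf{At}}\Rightarrow\Delta_{\mathsf{At}}$ is in $\mathcal{B}$, then $\vdash_{\mathcal{B}} \Theta_{\mathsf{At}},\Gamma_{\mathsf{At}}\Rightarrow\Delta_{\mathsf{At}},\Sigma_{\mathsf{At}}$ for all sets of atoms $\Theta_{\mathsf{At}},\Sigma_{\mathsf{At}}$; (Mix) if a rule with premises $\Gamma^i_{\mathsf{At}}\Rightarrow\Delta^i_{\mathsf{At}}$ ($1\le i\le n$) and conclusion $\Gamma_{\mathsf{At}}\Rightarrow\Delta_{\mathsf{At}}$ is in $\mathcal{B}$ and $\vdash_{\mathcal{B}}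 \Theta^i_{\mathsf{At}},\Gamma^i_{\mathsf{At}}\Rightarrow\Delta^i_{\mathsf{At}},\Sigma^i_{\mathsf{At}}$ for each $i$, then $\vdash_{\mathcal{B}} \Theta^1_{\mathsf{At}},\dots,\Theta^n_{\mathsf{At}},\Gamma_{\mathsf{At}}\Rightarrow\Delta_{\mathsf{At}},\Sigma^1_{\mathsf{At}},\dots,\Sigma^n_{\mathsf{At}}$. Support $\Vdash_{\mathcal{B}}$: (At) $\Vdash_{\mathcal{B}}\Gamma_{\mathsf{At}}$ iff $\vdash_{\mathcal{B}}\ \Rightarrow\Gamma_{\mathsf{At}}$; ($\land$) $\Vdash_{\mathcal{B}} A\land B,\Gamma$ iff $\Vdash_{\mathcal{B}}A,\Gamma$ and $\Vdash_{\mathcal{B}}B,\Gamma$; ($\lor$) $\Vdash_{\mathcal{B}}A\lor B,\Gamma$ iff $\Vdash_{\mathcal{B}}A,B,\Gamma$; ($\to$) $\Vdash_{\mathcal{B}}A\to B,\Gamma$ iff $A\Vdash_{\mathcal{B}}B,\Gamma$; ($\bot$) $\Vdash_{\mathcal{B}}\bot,\Gamma$ iff $\Vdash_{\mathcal{B}}\Gamma$; (Inf) for $n\ge1$, $\{A^1,\dots,A^n\}\Vdash_{\mathcal{B}}\Delta$ iff for every $\mathcal{C}\supseteq\mathcal{B}$ and all sets of atoms $\Theta^1_{\mathsf{At}},\dots,\Theta^n_{\mathsf{At}}$, if $\Vdash_{\mathcal{C}}\Theta^i_{\mathsf{At}},A^i$ for all $i$ then $\Vdash_{\mathcal{C}}\Theta^1_{\mathsf{At}},\dots,\Theta^n_{\mathsf{At}},\Delta$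 (and $\varnothing\Vdash_{\mathcal{B}}\Delta$ means $\Vdash_{\mathcal{B}}\Delta$). The atomic identity rule $\mathsf{Ainit}$ is the atomic axiom $\Gamma_{\mathsf{At}},p\Rightarrow p,\Delta_{\mathsf{At}}$. $\mathcal{HS}$ is the base consisting of all instances of $\mathsf{Ainit}$. Cut-free validity: $\Gamma\Vdash^{cf}\Delta$ iff $\Gamma\Vdash_{\mathcal{B}}\Delta$ for every base $\mathcal{B}\supseteq\mathcal{HS}$. $\mathsf{CLp}$ is the sequent calculus on sequents $\Gamma\Rightarrow\Delta$ (finite sets of formulas) with rules: $\mathsf{init}$: $\Gamma,A\Rightarrow A,\Delta$; $L\bot$: $\Gamma,\bot\Rightarrow\Delta$; $R\bot$: from $\Gamma\Rightarrow\Delta$ infer $\Gamma\Rightarrow\bot,\Delta$; $L\land$: from $A,B,\Gamma\Rightarrow\Delta$ infer $A\land B,\Gamma\Rightarrow\Delta$; $R\land$: from $\Gamma\Rightarrow\Delta,A$ and $\Gamma'\Rightarrow\Delta',B$ infer $\Gamma,\Gamma'\Rightarrow\Delta,\Delta',A\land B$; $L\lor$: from $A,\Gamma\Rightarrow\Delta$ and $B,\Gamma'\Rightarrow\Delta'$ infer $A\lor B,\Gamma,\Gamma'\Rightarrow\Delta,\Delta'$; $R\lor$: from $\Gamma\Rightarrow\Delta,A,B$ infer $\Gamma\Rightarrow\Delta,A\lor B$; $L\to$: from $\Gamma\Rightarrow\Delta,A$ and $B,\Gamma'\Rightarrow\Delta'$ infer $A\to B,\Gamma,\Gamma'\Rightarrow\Delta,\Delta'$;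 $R\to$: from $A,\Gamma\Rightarrow\Delta,B$ infer $\Gamma\Rightarrow\Delta,A\to B$. *)

(* Defs.v *)
From HB Require Import structures.
From mathcomp Require Import all_boot.
From mathcomp Require Import finmap.

Set Implicit Arguments.
Unset Strict Implicit.
Unset Printing Implicit Defensive.

Local Open Scope fset_scope.

Definition atom := nat.

Inductive formula : Type :=
| Atom of atom
| Bot
| And of formula & formula
| Or  of formula & formula
| Imp of formula & formula.

Fixpoint f_enc (F : formula) : GenTree.tree nat :=
  match F with
  | Atom p => GenTree.Leaf p
  | Bot => GenTree.Node 0 [::]
  | And A B => GenTree.Node 1 [:: f_enc A; f_enc B]
  | Or A B => GenTree.Node 2 [:: f_enc A; f_enc B]
  | Imp A B => GenTree.Node 3 [:: f_enc A; f_enc B]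
  end.

Fixpoint f_dec (t : GenTree.tree nat) : option formula :=
  match t with
  | GenTree.Leaf p => Some (Atom p)
  | GenTree.Node 0 [::] => Some Bot
  | GenTree.Node 1 [:: a; b] =>
      if (f_dec a, f_dec b) is (Some A, Some B) then Some (And A B) else None
  | GenTree.Node 2 [:: a; b] =>
      if (f_dec a, f_dec b) is (Some A, Some B) then Some (Or A B) else None
  | GenTree.Node 3 [:: a; b] =>
      if (f_dec a, f_dec b) is (Some A, Some B) then Some (Imp A B) else None
  | _ => None
  end.

Lemma f_encK : pcancel f_enc f_dec.
Proof. by elim=> //= [A -> B -> | A -> B -> | A -> B ->]. Qed.

HB.instance Definition _ := Countable.copy formula (pcan_type f_encK).

Definition aseq := ({fset atom} * {fset atom})%type.

Record rule := Rule { premises : seq aseq ; conclusion : aseq }.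

Definition base := rule -> Prop.

Definition extends (B C : base) : Prop := forall r, B r -> C r.

(** Derivability |-_B of atomic sequents (least relation closed under
    Axiom/Weakening and Mix). *)
Inductive derivable (B : base) : {fset atom} -> {fset atom} -> Prop :=
| d_axiom : forall (G D Th Sg : {fset atom}),
    B (Rule [::] (G, D)) -> derivable B (Th `|` G) (D `|` Sg)
| d_mix : forall (ps : seq aseq) (G D : {fset atom}) (Th Sg : nat -> {fset atom}),
    B (Rule ps (G, D)) ->
    (forall i, i < size ps ->
       derivable B (Th i `|` (nth (fset0, fset0) ps i).1)
                   ((nth (fset0, fset0) ps i).2 `|` Sg i)) ->
    derivable B ((\bigcup_(i <- iota 0 (size ps)) Th i) `|` G)
                (D `|` \bigcup_(i <- iota 0 (size ps)) Sg i).

Definition HS : base :=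
  fun r => exists (G D : {fset atom}) (p : atom),
      r = Rule [::] (p |` G, p |` D).

Definition is_atom (F : formula) : bool := if F is Atom _ then true else false.
Definition get_atom (F : formula) : option atom :=
  if F is Atom p then Some p else None.

Definition atomset (Th : {fset atom}) : {fset formula} := [fset Atom p | p in Th].

(** The atoms of a set of formulas (used when all its members are atoms). *)
Definition atoms_of (D : {fset formula}) : {fset atom} :=
  [fset p | p in pmap get_atom (enum_fset D)].

Fixpoint weight (F : formula) : nat :=
  match F with
  | Atom _ => 0
  | Bot => 1
  | And A B | Or A B | Imp A B => (weight A + weight B).+1
  end.

Definition measure (D : {fset formula}) : nat := \sum_(F <- enum_fset D) weight F.

Definition principal (D : {fset formula}) : option formula :=
  ohead [seq F <- enum_fset D | ~~ is_atom F].

(** The recursion is on fuel; the fuel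
    supplied by [support] always strictly exceeds [measure] of the argument,
    which strictly decreases in every clause. *)
Fixpoint supp (n : nat) (B : base) (D : {fset formula}) {struct n} : Prop :=
  match n with
  | 0 => False
  | n'.+1 =>
    match principal D with
    | None => derivable B fset0 (atoms_of D)
    | Some F =>
      let G := D `\ F in
      match F with
      | And A C => supp n' B (A |` G) /\ supp n' B (C |` G)
      | Or A C => supp n' B (A |` (C |` G))
      | Imp A C =>                                  (* (->) via (Inf), n = 1 *)
          forall B', extends B B' -> forall Th : {fset atom},
            supp n' B' (atomset Th `|` [fset A]) ->
            supp n' B' (atomset Th `|` (C |` G))
      | Bot => supp n' B G
      | Atom _ => False (* impossible: principal formulas are non-atomic *)
      end
    end
  end.

Definition support (B : base) (D : {fset formula}) : Prop :=
  supp (measure D).+1 B D.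

Definition consequence (B : base) (G D : {fset formula}) : Prop :=
  if G == fset0 then support B D
  else forall B', extends B B' ->
       forall Th : formula -> {fset atom},
         (forall A, A \in G -> support B' (atomset (Th A) `|` [fset A])) ->
         support B' ((\bigcup_(A <- enum_fset G) atomset (Th A)) `|` D).

Definition cf_valid (G D : {fset formula}) : Prop :=
  forall B, extends HS B -> consequence B G D.

Inductive CLp : {fset formula} -> {fset formula} -> Prop :=
| CLp_init : forall G D A, CLp (A |` G) (A |` D)
| CLp_Lbot : forall G D, CLp (Bot |` G) D
| CLp_Rbot : forall G D, CLp G D -> CLp G (Bot |` D)
| CLp_Land : forall G D A B, CLp (A |` (B |` G)) D -> CLp (And A B |` G) D
| CLp_Rand : forall G D G' D' A B,
    CLp G (A |` D) -> CLp G' (B |` D') -> CLp (G `|` G') (And A B |` (D `|` D'))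
| CLp_Lor : forall G D G' D' A B,
    CLp (A |` G) D -> CLp (B |` G') D' -> CLp (Or A B |` (G `|` G')) (D `|` D')
| CLp_Ror : forall G D A B, CLp G (A |` (B |` D)) -> CLp G (Or A B |` D)
| CLp_Limp : forall G D G' D' A B,
    CLp G (A |` D) -> CLp (B |` G') D' -> CLp (Imp A B |` (G `|` G')) (D `|` D')
| CLp_Rimp : forall G D A B, CLp (A |` G) (B |` D) -> CLp G (Imp A B |` D).

(* Main.v *)
Require Import Defs.
From mathcomp Require Import all_boot.
From mathcomp Require Import finmap.
Set Implicit Arguments. Unset Strict Implicit.
Local Open Scope fset_scope. Local Open Scope nat_scope.

Lemma measure_sub (A B : {fset formula}) : A `<=` B -> measure A <= measure B.
Proof.
move=> sAB; rewrite /measure [X in _ <= X](big_fsetID _ (mem A)) /=.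
rewrite (_ : [fset x in B | x \in A] = A); first exact: leq_addr.
apply/fsetP=> x; rewrite !inE /=; apply/andP/idP => [[]//|xA]; split=> //.
exact: (fsubsetP sAB).
Qed.

Lemma measureU (A B : {fset formula}) : measure (A `|` B) <= measure A + measure B.
Proof.
rewrite /measure (big_fsetID _ (mem A)) /=.
rewrite (_ : [fset x in A `|` B | x \in A] = A); last first.
  apply/fsetP=> x; rewrite !inE /=; by case: (x \in A); rewrite ?andbF ?andbT ?orbT.
apply: leq_add => //; apply: measure_sub; apply/fsubsetP=> x; rewrite !inE /=.
by case: (x \in A); rewrite ?andbF ?andbT ?orbT //=; move=> /andP[].
Qed.

Lemma measureD1 (F : formula) D : F \in D -> measure D = weight F + measure (D `\ F).
Proof. by move=> FD; rewrite /measure (big_fsetD1 F FD). Qed.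

Lemma measure1 F : measure [fset F] = weight F.
Proof. by rewrite /measure big_seq_fset1. Qed.

Lemma measureU1 F D : measure (F |` D) <= weight F + measure D.
Proof. by rewrite (leq_trans (measureU _ _)) // measure1. Qed.

Lemma mem_atomset Th x : (x \in atomset Th) = (if x is Atom p then p \in Th else false).
Proof.
apply/imfsetP/idP => [[p /= pTh ->]//|]. case: x => // p pTh. by exists p.
Qed.

Lemma measure_atomset Th : measure (atomset Th) = 0.
Proof. rewrite /measure (big1_fset _) // => x; rewrite mem_atomset; by case: x. Qed.

Lemma mem_atoms_of D p : (p \in atoms_of D) = (Atom p \in D).
Proof.
rewrite /atoms_of; apply/imfsetP/idP => [[q /= + ->]|pD].
  by rewrite mem_pmap => /mapP [[q'| |? ?|? ?|? ?] //= ? [->]].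
exists p => //=; rewrite mem_pmap; apply/mapP; by exists (Atom p).
Qed.

Lemma principalN D : principal D = None -> forall x, x \in D -> is_atom x.
Proof.
rewrite /principal; case E: [seq F <- _ | _] => [|//] _ x xD.
apply: contraT => nx.
have : x \in [seq F <- enum_fset D | ~~ is_atom F] by rewrite mem_filter nx.
by rewrite E.
Qed.

Lemma principalS D F : principal D = Some F -> F \in D /\ ~~ is_atom F.
Proof.
rewrite /principal; case E: [seq F <- _ | _] => [//|G s] /= [<-].
have : G \in [seq F <- enum_fset D | ~~ is_atom F] by rewrite E inE eqxx.
by rewrite mem_filter => /andP[-> ->].
Qed.

Lemma derivable_mono B C G D : extends B C -> derivable B G D -> derivable C G D.
Proof.
move=> BC; elim=> [G0 D0 Th Sg /BC|ps G0 D0 Th Sg /BC r _ IH].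
  exact: d_axiom.
exact: d_mix.
Qed.

Lemma bigU_const (F : nat -> {fset atom}) S r : r != [::] ->
  \bigcup_(i <- r) (F i `|` S) = (\bigcup_(i <- r) F i) `|` S.
Proof.
elim: r => // x [|y r] IH _.
  by rewrite !big_cons !big_nil !fsetU0.
rewrite big_cons IH // [in RHS]big_cons.
apply/fsetP => z; rewrite !inE.
by case: (z \in F x); case: (z \in S); rewrite ?orbT ?orbF.
Qed.

Lemma derivable_weak B G D S : derivable B G D -> derivable B G (D `|` S).
Proof.
move=> d; move: S; elim: d => {G D} [G0 D0 Th Sg HB|ps G0 D0 Th Sg HB _ IH] S.
  rewrite -fsetUA; exact: d_axiom.
case: ps HB IH => [|p ps] HB IH.
  rewrite /= !big_nil fsetU0; exact: d_axiom.
rewrite -fsetUA -(bigU_const Sg S) //; apply: d_mix => // i Hi.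
rewrite fsetUA; exact: IH.
Qed.

Lemma derivable_sub B G D D' : derivable B G D -> D `<=` D' -> derivable B G D'.
Proof. by move=> d /fsetUidPr <-; exact: derivable_weak. Qed.

Definition Bv (v : atom -> bool) : base := fun r =>
  HS r \/ (exists p, v p /\ r = Rule [::] (fset0, [fset p]))
       \/ (exists q, ~~ v q /\ r = Rule [:: (fset0, [fset q])] (fset0, fset0)).

Lemma HS_Bv v : extends HS (Bv v).
Proof. by move=> r; left. Qed.

Lemma Bv_axiom_sound v G0 D0 : Bv v (Rule [::] (G0, D0)) ->
  (forall p, p \in G0 -> v p) -> exists2 p, p \in D0 & v p.
Proof.
case=> [[G1 [D1 [p [-> ->]]]]|[[p [vp [-> ->]]]|[q [_ //]]]] H.
  by exists p; rewrite ?fsetU11 //; apply: H; rewrite fsetU11.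
by exists p; rewrite ?inE.
Qed.

Lemma Bv_sound v G D : derivable (Bv v) G D ->
  (forall p, p \in G -> v p) -> exists2 p, p \in D & v p.
Proof.
elim=> {G D} [G0 D0 Th Sg HB|ps G0 D0 Th Sg HB _ IH] H.
  have [p pD vp] := Bv_axiom_sound HB (fun p pG => H p (ltac:(by rewrite inE pG orbT))).
  by exists p; rewrite // inE pD.
case: HB => [[G1 [D1 [p E]]]|[[p [vp E]]|[q [vq E]]]];
  case: E => ? ? ?; subst.
- have HB : Bv v (Rule [::] (p |` G1, p |` D1)) by left; exists G1, D1, p.
  have [r rD vr] := Bv_axiom_sound HB
    (fun r rG => H r (ltac:(by rewrite /= big_nil fset0U))).
  by exists r; rewrite //= big_nil fsetU0.
- by exists p; rewrite //= big_nil fsetU0 inE.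
- have H0 : forall r, r \in Th 0 `|` fset0 -> v r.
    by move=> r; rewrite fsetU0 => rT; apply: H; rewrite /= big_cons big_nil !fsetU0.
  have [r rD vr] := IH 0 erefl H0.
  move: rD; rewrite /= inE; case/orP => [|rS].
    by rewrite inE => /eqP Er; move: vr; rewrite Er (negbTE vq).
  by exists r; rewrite // big_cons big_nil fsetU0 fset0U.
Qed.

Lemma Bv_cut v C G S q : extends (Bv v) C -> ~~ v q -> q \in S ->
  derivable C G S -> derivable C G (S `\ q).
Proof.
move=> ext vq qS d.
have R : C (Rule [:: (fset0, [fset q])] (fset0, fset0)).
  by apply: ext; right; right; exists q.
have := @d_mix C _ _ _ (fun _ => G) (fun _ => S `\ q) R.
rewrite /= !big_cons !big_nil !fsetU0 ?fset0U; apply; case => // _ /=.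
by rewrite fsetU0 fsetD1K.
Qed.

Lemma Bv_cut_all v C Th S : extends (Bv v) C -> derivable C fset0 S ->
  (forall p, p \in S -> p \in Th \/ ~~ v p) -> derivable C fset0 Th.
Proof.
move=> ext; move: {2}#|` S| (leqnn #|` S|) => k; elim: k S => [|k IH] S Hk d HS;
  (have [sub|/fsubsetPn [p pS pTh]] := boolP (S `<=` Th); first exact: derivable_sub d sub).
  by move: Hk; rewrite (cardfsD1 p) pS.
have vp : ~~ v p by case: (HS p pS) => //; rewrite (negbTE pTh).
have Hk' : #|` S `\ p| <= k by move: Hk; rewrite (cardfsD1 p) pS add1n ltnS.
have d' := Bv_cut ext vp pS d.
apply: (IH _ Hk' d') => r /fsetD1P [_ rS]; exact: HS.
Qed.

From mathcomp Require Import zify.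

Lemma mAt Th S : measure (atomset Th `|` S) <= measure S.
Proof. by have := measureU (atomset Th) S; rewrite measure_atomset. Qed.

Lemma inU1l (x : formula) S : x \in x |` S.
Proof. exact: fsetU11. Qed.
Lemma inU1r (x y : formula) S : x \in S -> x \in y |` S.
Proof. by move=> h; rewrite in_fsetU h orbT. Qed.
Lemma inUr (x : formula) A S : x \in S -> x \in A `|` S.
Proof. by move=> h; rewrite in_fsetU h orbT. Qed.
Lemma inU1P (x y : formula) S : x \in y |` S -> x = y \/ x \in S.
Proof. by rewrite in_fsetU in_fset1 => /orP [/eqP ->|]; [left|right]. Qed.
Lemma inUP (x : formula) A S : x \in A `|` S -> x \in A \/ x \in S.
Proof. by rewrite in_fsetU => /orP [] ; [left|right]. Qed.

Lemma atom_notF Th F : ~~ is_atom F -> F \notin atomset Th.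
Proof. by rewrite mem_atomset; case: F. Qed.

Lemma supp_W n C D Th : measure D < n -> derivable C fset0 Th ->
  atomset Th `<=` D -> supp n C D.
Proof.
elim: n C D Th => // n IH C D Th Hm d sub /=.
case Hp: (principal D) => [F|]; last first.
  apply: derivable_sub d _; apply/fsubsetP => p pTh; rewrite mem_atoms_of.
  by apply: (fsubsetP sub); rewrite mem_atomset.
have [FD nF] := principalS Hp.
have HmD := measureD1 FD.
have subG : forall X, atomset Th `<=` X |` (D `\ F).
  move=> X; apply/fsubsetP => y yTh; apply: inU1r; rewrite in_fsetD1 (fsubsetP sub _ yTh) andbT.
  by apply: contraTneq yTh => ->; apply: atom_notF.
case: F nF FD Hp HmD subG => [p||A B|A B|A B] //= _ FD Hp HmD subG.
- apply: IH d _ => //; first lia.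
  apply/fsubsetP => y yTh; case/inU1P: (fsubsetP (subG Bot) _ yTh) => [Ey|//]; by move: yTh; rewrite Ey mem_atomset.
- have := measureU1 A (D `\ And A B); have := measureU1 B (D `\ And A B).
  by split; apply: IH d _ => //; lia.
- have := measureU1 A (B |` (D `\ Or A B)); have := measureU1 B (D `\ Or A B).
  move=> h1 h2; apply: IH d _ => //; first lia.
  apply/fsubsetP => y /(fsubsetP (subG B)) /inU1P [->|yG]; first exact: inU1r (inU1l _ _).
  by apply: inU1r; apply: inU1r.
- move=> C' ext Th' _.
  have := mAt Th' (B |` (D `\ Imp A B)); have := measureU1 B (D `\ Imp A B).
  move=> h1 h2; apply: IH (derivable_mono ext d) _ => //; first lia.
  apply/fsubsetP => y /(fsubsetP (subG B)) yG; exact: inUr.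
Qed.

Fixpoint eval (v : atom -> bool) (F : formula) : bool :=
  match F with
  | Atom p => v p
  | Bot => false
  | And A B => eval v A && eval v B
  | Or A B => eval v A || eval v B
  | Imp A B => eval v A ==> eval v B
  end.

Lemma ext_trans B C E : extends B C -> extends C E -> extends B E.
Proof. by move=> h1 h2 r /h1 /h2. Qed.

Lemma TE v n :
  (forall C D, extends (Bv v) C -> measure D < n ->
     (exists2 x, x \in D & eval v x) -> supp n C D) /\
  (forall C D Th, extends (Bv v) C -> measure D < n ->
     (forall x, x \in D -> x \in atomset Th \/ ~~ eval v x) ->
     supp n C D -> derivable C fset0 Th).
Proof.
elim: n => [|n [IHT IHE]]; first by split.
split.
- move=> C D ext Hm [x xD ex] /=.
  case Hp: (principal D) => [F|]; last first.
    have := principalN Hp xD; case: x xD ex => // p pD vp _.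
    have : derivable C (fset0 `|` fset0) ([fset p] `|` atoms_of D).
      by apply: d_axiom; apply: ext; right; left; exists p.
    rewrite fsetU0 => d; apply: derivable_sub d _; apply/fsubsetP => r.
    by rewrite in_fsetU in_fset1 => /orP [/eqP ->|//]; rewrite mem_atoms_of.
  have [FD nF] := principalS Hp.
  have HmD := measureD1 FD.
  have xF : x = F \/ x \in D `\ F.
    by case: (eqVneq x F) => [->|ne]; [left|right; rewrite in_fsetD1 ne xD].
  case: F nF FD Hp HmD xF => [p||A B|A B|A B] //= _ FD Hp HmD xF.
  + apply: IHT => //; first lia.
    by case: xF => [Ex|xG]; [rewrite Ex in ex|exists x].
  + have := measureU1 A (D `\ And A B); have := measureU1 B (D `\ And A B).
    move=> h1 h2; case: xF => [Ex|xG].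
      by rewrite Ex /= in ex; case/andP: ex => eA eB; split; apply: IHT => //;
        [lia| exists A => //; exact: inU1l | lia | exists B => //; exact: inU1l].
    by split; apply: IHT => //; [lia| exists x => //; exact: inU1r | lia | exists x => //; exact: inU1r].
  + have := measureU1 A (B |` (D `\ Or A B)); have := measureU1 B (D `\ Or A B).
    move=> h1 h2; apply: IHT => //; first lia.
    case: xF => [Ex|xG].
      rewrite Ex /= in ex; case/orP: ex => e; [exists A => //; exact: inU1l|].
      by exists B => //; apply: inU1r; exact: inU1l.
    by exists x => //; apply: inU1r; apply: inU1r.
  + move=> C' ext' Th HA.
    have ext'' := ext_trans ext ext'.
    have := mAt Th (B |` (D `\ Imp A B)); have := measureU1 B (D `\ Imp A B).
    have := mAt Th [fset A]; rewrite measure1 => h3 h1 h2.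
    case: xF => [Ex|xG]; last first.
      by apply: IHT => //; [lia| exists x => //; apply: inUr; exact: inU1r].
    rewrite Ex /= in ex; case eB: (eval v B).
      by apply: IHT => //; [lia| exists B => //; apply: inUr; exact: inU1l].
    have eA : eval v A = false by move: ex; rewrite eB; case: (eval v A).
    have d : derivable C' fset0 Th.
      apply: (IHE C' _ Th ext'' _ _ HA); first lia.
      by move=> y /inUP [|]; [left| rewrite in_fset1 => /eqP ->; right; rewrite eA].
    apply: supp_W d _; first lia.
    by apply/fsubsetP => y yTh; rewrite in_fsetU yTh.
- move=> C D Th ext Hm HD /=.
  case Hp: (principal D) => [F|] HS; last first.
    apply: (Bv_cut_all ext HS) => p; rewrite mem_atoms_of => /HD [].
      by rewrite mem_atomset; left.
    by right.
  have [FD nF] := principalS Hp.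
  have HmD := measureD1 FD.
  have HG : forall y, y \in D `\ F -> y \in atomset Th \/ ~~ eval v y.
    by move=> y /fsetD1P [_ /HD].
  have eF : ~~ eval v F by case: (HD F FD) => //; rewrite (negbTE (atom_notF _ nF)).
  case: F nF FD Hp HmD HG eF HS => [p||A B|A B|A B] //= _ FD Hp HmD HG eF HS.
  + by apply: IHE HS => //; lia.
  + have := measureU1 A (D `\ And A B); have := measureU1 B (D `\ And A B).
    move=> h1 h2; case: HS => HSA HSB; case eA: (eval v A).
      apply: (IHE _ _ _ ext _ _ HSB); first lia.
      by move=> y /inU1P [->|/HG //]; right; move: eF; rewrite eA.
    apply: (IHE _ _ _ ext _ _ HSA); first lia.
    by move=> y /inU1P [->|/HG //]; right; rewrite eA.
  + have := measureU1 A (B |` (D `\ Or A B)); have := measureU1 B (D `\ Or A B).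
    move=> h1 h2; apply: (IHE _ _ _ ext _ _ HS); first lia.
    move: eF; rewrite negb_or => /andP [eA eB].
    by move=> y /inU1P [->|/inU1P [->|/HG //]]; right.
  + move: eF; rewrite negb_imply => /andP [eA eB].
    have := mAt fset0 (B |` (D `\ Imp A B)); have := measureU1 B (D `\ Imp A B).
    have := mAt fset0 [fset A]; rewrite measure1 => h3 h1 h2.
    have HA : supp n C (atomset fset0 `|` [fset A]).
      apply: IHT => //; first lia.
      by exists A => //; rewrite in_fsetU in_fset1 eqxx orbT.
    have := HS C (fun r h => h) fset0 HA.
    apply: (IHE _ _ _ ext); first lia.
    move=> y /inUP [|/inU1P [->|/HG //]]; last by right.
    by case/imfsetP => q /=; rewrite inE.
Qed.

Lemma splitD (F y : formula) D : y \in D -> y = F \/ y \in D `\ F.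
Proof. by case: (eqVneq y F) => [->|ne] yD; [left|right; rewrite in_fsetD1 ne yD]. Qed.

Lemma CLp_complete G D :
  (forall v, (forall A, A \in G -> eval v A) -> exists2 B, B \in D & eval v B) ->
  CLp G D.
Proof.
move: {2}(measure G + measure D) (erefl (measure G + measure D)) => n.
elim/ltn_ind: n G D => n IH G D En H.
case HpG: (principal G) => [F|].
  have [FG nF] := principalS HpG.
  have HmG := measureD1 FG.
  rewrite -(fsetD1K FG).
  have HG : forall v, eval v F -> (forall y, y \in G `\ F -> eval v y) ->
      exists2 B, B \in D & eval v B.
    by move=> v eF eG; apply: H => y /(splitD F) [->|/eG].
  case: F nF FG HpG HmG HG => [p||A B|A B|A B] //= _ FG HpG HmG HG.
  + exact: CLp_Lbot.
  + apply: CLp_Land; have := measureU1 A (B |` (G `\ And A B)); have := measureU1 B (G `\ And A B).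
    move=> h1 h2; apply: (IH _ _ _ _ erefl); first lia.
    move=> v Hv; apply: HG; first by rewrite (Hv A (inU1l _ _)) (Hv B (inU1r _ (inU1l _ _))).
    by move=> y yG; apply: Hv; apply: inU1r; apply: inU1r.
  + have := measureU1 A (G `\ Or A B); have := measureU1 B (G `\ Or A B) => h1 h2.
    have := @CLp_Lor (G `\ Or A B) D (G `\ Or A B) D A B; rewrite !fsetUid; apply.
      apply: (IH _ _ _ _ erefl); first lia.
      move=> v Hv; apply: HG; first by rewrite (Hv A (inU1l _ _)).
      by move=> y yG; apply: Hv; apply: inU1r.
    apply: (IH _ _ _ _ erefl); first lia.
    move=> v Hv; apply: HG; first by rewrite (Hv B (inU1l _ _)) orbT.
    by move=> y yG; apply: Hv; apply: inU1r.
  + have := measureU1 A D; have := measureU1 B (G `\ Imp A B) => h1 h2.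
    have := @CLp_Limp (G `\ Imp A B) D (G `\ Imp A B) D A B; rewrite !fsetUid; apply.
      apply: (IH _ _ _ _ erefl); first lia.
      move=> v Hv; case eA: (eval v A); first by exists A => //; apply: inU1l.
      have [y yD ey] := HG v (ltac:(by rewrite /= eA)) Hv.
      by exists y => //; apply: inU1r.
    apply: (IH _ _ _ _ erefl); first lia.
    move=> v Hv; apply: HG; first by rewrite (Hv B (inU1l _ _)) implybT.
    by move=> y yG; apply: Hv; apply: inU1r.
case HpD: (principal D) => [F|].
  have [FD nF] := principalS HpD.
  have HmD := measureD1 FD.
  rewrite -(fsetD1K FD).
  have HD : forall v, (forall A, A \in G -> eval v A) ->
      eval v F \/ exists2 B, B \in D `\ F & eval v B.
    move=> v /H [y /(splitD F) [->|yD] ey]; [by left|by right; exists y].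
  case: F nF FD HpD HmD HD => [p||A B|A B|A B] //= _ FD HpD HmD HD.
  + apply: CLp_Rbot; apply: (IH _ _ _ _ erefl); first lia.
    by move=> v /HD [].
  + have := @CLp_Rand G (D `\ And A B) G (D `\ And A B) A B; rewrite !fsetUid; apply.
      have := measureU1 A (D `\ And A B) => h1.
      apply: (IH _ _ _ _ erefl); first lia.
      move=> v /HD [/andP [eA _]|[y yD ey]]; first by exists A => //; apply: inU1l.
      by exists y => //; apply: inU1r.
    have := measureU1 B (D `\ And A B) => h1.
    apply: (IH _ _ _ _ erefl); first lia.
    move=> v /HD [/andP [_ eB]|[y yD ey]]; first by exists B => //; apply: inU1l.
    by exists y => //; apply: inU1r.
  + apply: CLp_Ror.
    have := measureU1 A (B |` (D `\ Or A B)); have := measureU1 B (D `\ Or A B) => h1 h2.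
    apply: (IH _ _ _ _ erefl); first lia.
    move=> v /HD [/orP [eA|eB]|[y yD ey]]; first by exists A => //; apply: inU1l.
      by exists B => //; apply: inU1r; apply: inU1l.
    by exists y => //; apply: inU1r; apply: inU1r.
  + apply: CLp_Rimp.
    have := measureU1 A G; have := measureU1 B (D `\ Imp A B) => h1 h2.
    apply: (IH _ _ _ _ erefl); first lia.
    move=> v Hv.
    have eA : eval v A by apply: Hv; apply: inU1l.
    have Hv' : forall y, y \in G -> eval v y by move=> y yG; apply: Hv; apply: inU1r.
    case: (HD v Hv') => [|[y yD ey]]; first by rewrite eA /= => eB; exists B => //; apply: inU1l.
    by exists y => //; apply: inU1r.
pose v p := Atom p \in G.
have [y yD ey] : exists2 y, y \in D & eval v y.
  apply: H => A AG; have := principalN HpG AG; case: A AG => // p pG _; exact: pG.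
have := principalN HpD yD; case: y yD ey => // p pD ep _.
rewrite -(fsetD1K ep) -(fsetD1K pD); exact: CLp_init.
Qed.

Lemma atomset0 : atomset fset0 = fset0.
Proof. by apply/fsetP => x; rewrite inE; apply/negbTE; apply/imfsetP => -[q]; rewrite inE. Qed.

Theorem theorem4 (G D : {fset formula}) : cf_valid G D -> CLp G D.
Proof.
move=> H; apply: CLp_complete => v HG.
case: (boolP (has (eval v) (enum_fset D))) => [/hasP [B BD eB]|/hasPn nD].
  by exists B.
exfalso.
have Hc := H (Bv v) (@HS_Bv v); rewrite /consequence in Hc.
have E0 : forall D', Defs.support (Bv v) D' -> (forall x, x \in D' -> ~~ eval v x) -> False.
  move=> D' S' nD'.
  have d := (TE v (measure D').+1).2 (Bv v) D' fset0 (fun r h => h) (ltnSn _)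
     (fun x xD => or_intror (nD' x xD)) S'.
  have [p] := Bv_sound d (fun p => ltac:(by rewrite inE)).
  by rewrite inE.
move: Hc; case: eqP => [_ Hc|_ Hc].
  by apply: (E0 D Hc) => x; apply: nD.
have Hs : forall A, A \in G -> Defs.support (Bv v) (atomset fset0 `|` [fset A]).
  move=> A AG; apply: (TE v _).1 => //; exists A; first by rewrite in_fsetU in_fset1 eqxx orbT.
  exact: HG.
have := Hc (Bv v) (fun r h => h) (fun _ => fset0) Hs.
rewrite big1 ?fset0U; last by move=> *; exact: atomset0.
by move=> S'; apply: (E0 D S') => x; apply: nD.
Qed.
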